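(* Let $a\ge2$, $d\ge1$ and $s$ be integers with $\gcd(a,d)=1$ and $1\le s<a$, and write $c=\lceil (a-1)/s\rceil$. Let $\mathit{NR}$ be the set of positive integers not representable as $\sum_{i=0}^s(a+id)x_i$ with $x_0,\dots,x_s$ nonnegative integers, and let $S_m=\sum_{n\in\mathit{NR}}n^m$. Then \[ 2S_0=-sc^2+(2a-2+s)c+(a-1)(d-1), \] \[ 12S_1=-2s(2a+ds)c^3+\bigl(6a^2+3(2a+ds)(s-1)\bigr)c^2+\bigl(6(d-1)a(a-1)+(3d-2a-ds)s\bigr)c+(a-1)(d-1)(2ad-a-d-1), \] \[ \begin{aligned} 12S_2={}&-s\bigl((a+sd)(2a+sd)+a^2\bigr)c^4+\bigl(4a^3+2(3s-2)a^2+2sd(3s-2)a+2s^2d^2(s-1)\bigr)c^3\\ &+\bigl(6(d-1)a^3+3(2-s-2d)a^2-3sd(s-2)a-sd^2(s^2-3s+1)\bigr)c^2\\ &+\bigl(2(2d-1)(d-1)a^3-(6d^2-6d+2)a^2+2d(d-s)a+s(1-s)d^2\bigr)c+ad(a-1)(d-1)(ad-a-d). \end{aligned} \]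
   Context: $\lceil x\rceil$ is the least integer not less than $x$. *)

(* Defs.v *)
From HB Require Import structures.
From mathcomp Require Import all_boot all_order all_algebra.
Set Implicit Arguments. Unset Strict Implicit. Unset Printing Implicit Defensive.
Import Order.TTheory GRing.Theory Num.Theory.

Definition representable (a d s n : nat) : Prop :=
  exists x : 'I_s.+1 -> nat, n = (\sum_(i < s.+1) (a + i * d) * x i)%N.

Definition NR (a d s n : nat) : Prop := (0 < n)%N /\ ~ representable a d s n.

(* S_m computed over a (duplicate-free) enumeration l of NR, as an integer *)
Definition powsum (l : seq nat) (m : nat) : int :=
  (\sum_(n <- l) (n%:Z) ^+ m)%R.

Definition ceil_c (a s : nat) : int := Num.ceil ((a.-1)%:R / (s%:R) : rat).

(* Main.v *)
Require Import Defs.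
From HB Require Import structures.
From mathcomp Require Import all_boot all_order all_algebra.
From mathcomp Require Import ring lra zify.
Import Order.TTheory GRing.Theory Num.Theory.

Lemma rep_add a d s n (i : nat) : (i <= s)%N -> representable a d s n ->
  representable a d s (n + (a + i * d)).
Proof.
move=> hi [x ->].
pose i0 : 'I_s.+1 := Ordinal (hi : (i < s.+1)%N).
exists (fun m => x m + (m == i0)).
symmetry.
rewrite (eq_bigr (fun m : 'I_s.+1 => (a + m*d) * x m + (a + m*d) * (m == i0))); last by move=> m _; rewrite mulnDr.
rewrite big_split /=; congr (_ + _).
rewrite (bigD1 i0) //= eqxx muln1 big1 ?addn0 // => m /negbTE ->.
by rewrite muln0.
Qed.

Lemma rep_char a d s n : representable a d s n <->
  exists k j, (j <= s * k)%N /\ n = k * a + j * d.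
Proof.
split.
  case=> x ->.
  exists (\sum_(i < s.+1) x i), (\sum_(i < s.+1) i * x i); split.
    rewrite big_distrr /=; apply: leq_sum => i _.
    by rewrite leq_mul2r -ltnS ltn_ord orbT.
  rewrite big_distrl big_distrl /= -big_split /=.
  by apply: eq_bigr => i _; rewrite mulnDl; congr (_ + _); [rewrite mulnC | rewrite mulnAC mulnC mulnA].
case=> k [j [hj ->]].
elim: k j hj => [|k IH] j hj.
  move: hj; rewrite muln0 leqn0 => /eqP ->.
  by exists (fun _ => 0); rewrite big1 // => i _; rewrite muln0.
set i := minn j s.
have hi : (i <= s)%N by apply: geq_minr.
have hij : (i <= j)%N by apply: geq_minl.
have : (j - i <= s * k)%N.
  rewrite /i; move: hj; rewrite mulnS; lia.
move=> /IH H; have := @rep_add a d s _ i hi H.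
have -> : (k * a + (j - i) * d + (a + i * d) = k.+1 * a + j * d)%N.
  by rewrite mulSn mulnBl; move: (leq_mul2r d i j); rewrite hij orbT => h; lia.
done.
Qed.


Definition qc (s t : nat) : nat := (t + s.-1) %/ s.

Lemma qc_ge s t : (0 < s)%N -> (t <= s * qc s t)%N.
Proof.
move=> s0; rewrite /qc.
have := ltn_pmod (t + s.-1) s0; have := divn_eq (t + s.-1) s.
set q := (_ %/ s); set r := (_ %% s); lia.
Qed.

Lemma qc_lt s t : (0 < s)%N -> (s * qc s t < t + s)%N.
Proof.
move=> s0; rewrite /qc.
have := leq_divM (t + s.-1) s.
set q := (_ %/ s); lia.
Qed.

Lemma qc_unique s t k : (0 < s)%N -> (t <= s * k)%N -> (s * k < t + s)%N -> qc s t = k.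
Proof.
move=> s0 h1 h2; have g1 := @qc_ge s t s0; have g2 := @qc_lt s t s0.
set q := qc s t in g1 g2 *.
have : (s * k < s * q.+1)%N by lia.
have : (s * q < s * k.+1)%N by lia.
rewrite !ltn_pmul2l //; lia.
Qed.

Lemma qc_le s t k : (0 < s)%N -> (t <= s * k)%N -> (qc s t <= k)%N.
Proof.
move=> s0 h; have g2 := @qc_lt s t s0.
set q := qc s t in g2 *.
have : (s * q < s * k.+1)%N by lia.
rewrite ltn_pmul2l //.
Qed.

Lemma qc0 s : (0 < s)%N -> qc s 0 = 0%N.
Proof. by move=> s0; apply: qc_unique => //; rewrite muln0. Qed.

Lemma qc_step s m : (0 < s)%N ->
  qc s m.+1 = qc s m \/ (qc s m.+1 = (qc s m).+1 /\ m = (qc s m * s)%N).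
Proof.
move=> s0; have g1 := @qc_ge s m s0; have g2 := @qc_lt s m s0.
set q := qc s m in g1 g2 *.
case: (leqP m.+1 (s * q)) => h.
  by left; apply: qc_unique => //; lia.
right; split; first by apply: qc_unique => //; lia.
lia.
Qed.


Definition rr (a d t : nat) : nat := (t * d) %% a.
Definition WW (a d s t : nat) : nat := qc s t + (t * d) %/ a.
Definition ll (a d s : nat) : seq nat :=
  [seq rr a d t + j * a | t <- iota 0 a, j <- iota 0 (WW a d s t)].

Lemma rr_inj a d t t' : coprime a d -> (t < a)%N -> (t' < a)%N ->
  rr a d t = rr a d t' -> t = t'.
Proof.
move=> cop.
wlog le : t t' / (t <= t')%N.
  move=> H h1 h2 e; case: (leqP t t') => h; first exact: H.
  by symmetry; apply: H => //; apply: ltnW.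
move=> h1 h2 e.
have : (a %| (t' - t) * d)%N.
  by rewrite mulnBl -eqn_mod_dvd ?leq_mul2r ?le ?orbT //; apply/eqP; rewrite -/(rr a d t') -e.
rewrite Gauss_dvdl // => /dvdn_leq.
case: (ltnP t t') => h; last by lia.
by move=> /(_ ltac:(lia)); lia.
Qed.

Lemma rr_lt a d t : (0 < a)%N -> (rr a d t < a)%N.
Proof. by move=> a0; apply: ltn_pmod. Qed.

Lemma rr_perm a d : (0 < a)%N -> coprime a d ->
  perm_eq (map (rr a d) (iota 0 a)) (iota 0 a).
Proof.
move=> a0 cop.
have U : uniq (map (rr a d) (iota 0 a)).
  rewrite map_inj_in_uniq ?iota_uniq // => x y; rewrite !mem_iota /= !add0n.
  exact: rr_inj.
have S : {subset map (rr a d) (iota 0 a) <= iota 0 a}.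
  by move=> x /mapP [t _ ->]; rewrite mem_iota /= add0n rr_lt.
have Sz : (size (iota 0 a) <= size (map (rr a d) (iota 0 a)))%N by rewrite size_map.
have [_ E] := uniq_min_size U S Sz.
by apply: uniq_perm => //; apply: iota_uniq.
Qed.

Lemma rr_surj a d x : (0 < a)%N -> coprime a d -> (x < a)%N ->
  exists t, (t < a)%N /\ rr a d t = x.
Proof.
move=> a0 cop xa.
have : x \in map (rr a d) (iota 0 a).
  by rewrite (perm_mem (@rr_perm a d a0 cop)) mem_iota /= add0n.
by case/mapP => t; rewrite mem_iota /= add0n => h ->; exists t.
Qed.


Lemma rr_pos a d t : coprime a d -> (0 < t < a)%N -> (0 < rr a d t)%N.
Proof.
move=> cop /andP [t0 ta]; rewrite lt0n; apply/negP => /eqP h.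
have : t = 0%N by apply: (@rr_inj a d) => //; [lia | rewrite h /rr mul0n mod0n].
lia.
Qed.

Lemma rrD a r j : (r < a)%N -> (r + j * a) %% a = r.
Proof. by move=> h; rewrite addnC modnMDl modn_small. Qed.

Lemma uniq_ll a d s : (0 < a)%N -> coprime a d -> uniq (ll a d s).
Proof.
move=> a0 cop; apply: allpairs_uniq_dep; first exact: iota_uniq.
  by move=> x _; apply: iota_uniq.
move=> p1 p2 /allpairsPdep [t1 [j1 [h1 _ ->]]] /allpairsPdep [t2 [j2 [h2 _ ->]]] /= e.
move: h1 h2; rewrite !mem_iota /= !add0n => h1 h2.
have et : t1 = t2.
  apply: (@rr_inj a d) => //.
  by rewrite -(@rrD a (rr a d t1) j1) ?rr_lt // e rrD ?rr_lt.
subst t2; move: e => /eqP; rewrite eqn_add2l eqn_pmul2r // => /eqP ->.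
done.
Qed.

Lemma mem_ll a d s n : (0 < a)%N -> (0 < s)%N -> coprime a d ->
  n \in ll a d s <-> NR a d s n.
Proof.
move=> a0 s0 cop; split.
  case/allpairsPdep => t [j [ht hj ->]].
  move: ht hj; rewrite !mem_iota /= !add0n => ht hj.
  have t0 : (0 < t)%N.
    case: t ht hj => // _; by rewrite /WW qc0 // mul0n div0n.
  split; first by have := @rr_pos a d t cop ltac:(lia); lia.
  move/rep_char => [k [j' [hj' e]]].
  set T := (t * d)%N in e hj.
  have eT := divn_eq T a.
  have ej' := divn_eq j' a.
  have hm : rr a d (j' %% a) = rr a d t.
    rewrite /rr modnMml -/T.
    have : ((j' * d) + (k + T %/ a) * a) %% a = (T + j * a) %% a.
      by congr (_ %% _); rewrite /rr -/T in e; lia.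
    by rewrite (addnC (j' * d)) (addnC T) !modnMDl.
  have ej't : (j' %% a)%N = t by apply: (@rr_inj a d) => //; apply: ltn_pmod.
  rewrite ej't in ej'.
  set m := (j' %/ a)%N in ej'.
  rewrite /rr -/T in e.
  have E2 : ((k + m * d + T %/ a) * a = j * a)%N.
    rewrite ej' in e; rewrite /T in e eT *; nia.
  move: E2 => /eqP; rewrite eqn_pmul2r // => /eqP E2.
  have : (qc s t <= k)%N by apply: qc_le => //; lia.
  rewrite /WW -/T in hj; lia.
case=> n0 nrep.
have [t [ta et]] := @rr_surj a d (n %% a) a0 cop (ltn_pmod n a0).
apply/allpairsPdep; exists t, (n %/ a); split.
- by rewrite mem_iota.
- rewrite mem_iota /= add0n ltnNge; apply/negP => hW.
  apply: nrep; apply/rep_char.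
  exists (n %/ a - (t * d) %/ a)%N, t; split.
    apply: (leq_trans (@qc_ge s t s0)); rewrite leq_mul2l; apply/orP; right.
    by rewrite /WW in hW; lia.
  have eT := divn_eq (t * d) a; have en := divn_eq n a.
  rewrite /rr in et; rewrite mulnBl; rewrite /WW in hW.
  have : ((t * d) %/ a * a <= n %/ a * a)%N by rewrite leq_mul2r; apply/orP; right; lia.
  lia.
- by rewrite addnC et -divn_eq.
Qed.

Local Open Scope ring_scope.

Definition Q0 (A x : int) : int := x.
Definition Q1 (A x : int) : int := x ^+ 2 - A * x.
Definition Q2 (A x : int) : int := 2 * x ^+ 3 - 3 * A * x ^+ 2 + A ^+ 2 * x.

Lemma class0 (A r : int) W :
  A * \sum_(j <- iota 0 W) (r + (j%:Z) * A) ^+ 0 = Q0 A (W%:Z * A + r) - Q0 A r.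
Proof.
elim: W => [|W IH]; first by rewrite big_nil /Q0; ring.
rewrite -[W.+1]addn1 iotaD big_cat big_seq1 mulrDr IH /Q0 PoszD; ring.
Qed.

Lemma class1 (A r : int) W :
  2 * A * \sum_(j <- iota 0 W) (r + (j%:Z) * A) ^+ 1 = Q1 A (W%:Z * A + r) - Q1 A r.
Proof.
elim: W => [|W IH]; first by rewrite big_nil /Q1; ring.
rewrite -[W.+1]addn1 iotaD big_cat big_seq1 mulrDr IH /Q1 PoszD ?add0n; ring.
Qed.

Lemma class2 (A r : int) W :
  6 * A * \sum_(j <- iota 0 W) (r + (j%:Z) * A) ^+ 2 = Q2 A (W%:Z * A + r) - Q2 A r.
Proof.
elim: W => [|W IH]; first by rewrite big_nil /Q2; ring.
rewrite -[W.+1]addn1 iotaD big_cat big_seq1 mulrDr IH /Q2 PoszD ?add0n; ring.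
Qed.

Lemma rsum0 A n : 2 * \sum_(x <- iota 0 n) Q0 A x%:Z = n%:Z * (n%:Z - 1).
Proof.
elim: n => [|n IH]; first by rewrite big_nil; ring.
rewrite -[n.+1]addn1 iotaD big_cat big_seq1 mulrDr IH /Q0 PoszD ?add0n; ring.
Qed.

Lemma rsum1 A n : 6 * \sum_(x <- iota 0 n) Q1 A x%:Z =
  (n%:Z - 1) * n%:Z * (2 * n%:Z - 1) - 3 * A * n%:Z * (n%:Z - 1).
Proof.
elim: n => [|n IH]; first by rewrite big_nil; ring.
rewrite -[n.+1]addn1 iotaD big_cat big_seq1 mulrDr IH /Q1 PoszD ?add0n; ring.
Qed.

Lemma rsum2 A n : 2 * \sum_(x <- iota 0 n) Q2 A x%:Z =
  n%:Z ^+ 2 * (n%:Z - 1) ^+ 2 - A * (n%:Z - 1) * n%:Z * (2 * n%:Z - 1)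
  + A ^+ 2 * n%:Z * (n%:Z - 1).
Proof.
elim: n => [|n IH]; first by rewrite big_nil; ring.
rewrite -[n.+1]addn1 iotaD big_cat big_seq1 mulrDr IH /Q2 PoszD ?add0n; ring.
Qed.
Definition P0 (N C S A D : int) : int :=
   N ^+ 2 * D + 2 * N * C * A - N * D - C ^+ 2 * S * A
    + C * S * A - 2 * C * A.
Definition P1 (N C S A D : int) : int :=
   2 * N ^+ 3 * D ^+ 2 + 6 * N ^+ 2 * C * A * D - 3 * N ^+ 2 * A * D - 3 * N ^+ 2 * D ^+ 2
    + 6 * N * C ^+ 2 * A ^+ 2 - 6 * N * C * A ^+ 2 - 6 * N * C * A * D + 3 * N * A * D
    + N * D ^+ 2 - 2 * C ^+ 3 * S ^+ 2 * A * D - 4 * C ^+ 3 * S * A ^+ 2 + 3 * C ^+ 2 * S ^+ 2 * A * D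
    + 6 * C ^+ 2 * S * A ^+ 2 - 3 * C ^+ 2 * S * A * D - 6 * C ^+ 2 * A ^+ 2 - C * S ^+ 2 * A * D
    - 2 * C * S * A ^+ 2 + 3 * C * S * A * D + 6 * C * A ^+ 2.
Definition P2 (N C S A D : int) : int :=
   N ^+ 4 * D ^+ 3 + 4 * N ^+ 3 * C * A * D ^+ 2 - 2 * N ^+ 3 * A * D ^+ 2 - 2 * N ^+ 3 * D ^+ 3
    + 6 * N ^+ 2 * C ^+ 2 * A ^+ 2 * D - 6 * N ^+ 2 * C * A ^+ 2 * D - 6 * N ^+ 2 * C * A * D ^+ 2 + N ^+ 2 * A ^+ 2 * D
    + 3 * N ^+ 2 * A * D ^+ 2 + N ^+ 2 * D ^+ 3 + 4 * N * C ^+ 3 * A ^+ 3 - 6 * N * C ^+ 2 * A ^+ 3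
    - 6 * N * C ^+ 2 * A ^+ 2 * D + 2 * N * C * A ^+ 3 + 6 * N * C * A ^+ 2 * D + 2 * N * C * A * D ^+ 2
    - N * A ^+ 2 * D - N * A * D ^+ 2 - C ^+ 4 * S ^+ 3 * A * D ^+ 2 - 3 * C ^+ 4 * S ^+ 2 * A ^+ 2 * D
    - 3 * C ^+ 4 * S * A ^+ 3 + 2 * C ^+ 3 * S ^+ 3 * A * D ^+ 2 + 6 * C ^+ 3 * S ^+ 2 * A ^+ 2 * D - 2 * C ^+ 3 * S ^+ 2 * A * D ^+ 2
    + 6 * C ^+ 3 * S * A ^+ 3 - 4 * C ^+ 3 * S * A ^+ 2 * D - 4 * C ^+ 3 * A ^+ 3 - C ^+ 2 * S ^+ 3 * A * D ^+ 2
    - 3 * C ^+ 2 * S ^+ 2 * A ^+ 2 * D + 3 * C ^+ 2 * S ^+ 2 * A * D ^+ 2 - 3 * C ^+ 2 * S * A ^+ 3 + 6 * C ^+ 2 * S * A ^+ 2 * D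
    - C ^+ 2 * S * A * D ^+ 2 + 6 * C ^+ 2 * A ^+ 3 - C * S ^+ 2 * A * D ^+ 2 - 2 * C * S * A ^+ 2 * D
    + C * S * A * D ^+ 2 - 2 * C * A ^+ 3.

Lemma wsum0 s A D m : (0 < s)%N ->
  2 * \sum_(t <- iota 0 m.+1) Q0 A ((qc s t)%:Z * A + t%:Z * D)
  = P0 (m.+1)%:Z (qc s m)%:Z s%:Z A D.
Proof.
move=> s0; elim: m => [|m IH].
  by rewrite /= big_seq1 qc0 // /P0 /Q0; ring.
rewrite -[m.+2]addn1 iotaD big_cat big_seq1 mulrDr IH ?add0n.
have [e|[e1 e2]] := @qc_step s m s0.
  rewrite e /P0 /Q0; set c := qc s m; rewrite !PoszD; ring.
rewrite e1 /P0 /Q0; set c := qc s m; rewrite e2 !PoszD ?PoszM; ring.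
Qed.

Lemma wsum1 s A D m : (0 < s)%N ->
  6 * \sum_(t <- iota 0 m.+1) Q1 A ((qc s t)%:Z * A + t%:Z * D)
  = P1 (m.+1)%:Z (qc s m)%:Z s%:Z A D.
Proof.
move=> s0; elim: m => [|m IH].
  by rewrite /= big_seq1 qc0 // /P1 /Q1; ring.
rewrite -[m.+2]addn1 iotaD big_cat big_seq1 mulrDr IH ?add0n.
have [e|[e1 e2]] := @qc_step s m s0.
  rewrite e /P1 /Q1; set c := qc s m; rewrite !PoszD; ring.
rewrite e1 /P1 /Q1; set c := qc s m; rewrite e2 !PoszD ?PoszM; ring.
Qed.

Lemma wsum2 s A D m : (0 < s)%N ->
  2 * \sum_(t <- iota 0 m.+1) Q2 A ((qc s t)%:Z * A + t%:Z * D)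
  = P2 (m.+1)%:Z (qc s m)%:Z s%:Z A D.
Proof.
move=> s0; elim: m => [|m IH].
  by rewrite /= big_seq1 qc0 // /P2 /Q2; ring.
rewrite -[m.+2]addn1 iotaD big_cat big_seq1 mulrDr IH ?add0n.
have [e|[e1 e2]] := @qc_step s m s0.
  rewrite e /P2 /Q2; set c := qc s m; rewrite !PoszD; ring.
rewrite e1 /P2 /Q2; set c := qc s m; rewrite e2 !PoszD ?PoszM; ring.
Qed.


Lemma ceil_qc a s : (0 < s)%N -> ceil_c a s = (qc s a.-1)%:Z.
Proof.
move=> s0; rewrite /ceil_c; apply: ceil_def.
have h1 := @qc_ge s a.-1 s0; have h2 := @qc_lt s a.-1 s0.
set q := qc s a.-1 in h1 h2 *.
have h1' : (a.-1)%:R <= (s%:R * q%:R : rat) by rewrite -natrM ler_nat.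
have h2' : (s%:R * q%:R : rat) < (a.-1)%:R + s%:R by rewrite -natrM -natrD ltr_nat.
have sp : (0 : rat) < s%:R by rewrite ltr0n.
rewrite rmorphB /= rmorph1 pmulrn.
rewrite ltr_pdivlMr // ler_pdivrMr //; apply/andP; split; nra.
Qed.

Lemma wr a d s t : ((WW a d s t)%:Z * a%:Z + (rr a d t)%:Z = (qc s t)%:Z * a%:Z + t%:Z * d%:Z)%R.
Proof. by rewrite -!PoszM -!PoszD /WW /rr mulnDl -addnA -divn_eq. Qed.

Lemma powsumE a d s m : powsum (ll a d s) m =
  \sum_(t <- iota 0 a) \sum_(j <- iota 0 (WW a d s t)) ((rr a d t)%:Z + j%:Z * a%:Z) ^+ m.
Proof.
rewrite /powsum /ll big_allpairs_dep; apply: eq_bigr => t _; apply: eq_bigr => j _.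
by rewrite PoszD PoszM.
Qed.

Lemma rsumE (Q : int -> int) a d : (0 < a)%N -> coprime a d ->
  \sum_(t <- iota 0 a) Q (rr a d t)%:Z = \sum_(x <- iota 0 a) Q x%:Z.
Proof.
by move=> a0 cop; rewrite -[RHS](perm_big _ (@rr_perm a d a0 cop)) big_map.
Qed.

Lemma hsum0 a d s : (0 < a)%N -> coprime a d ->
  (a%:Z) * powsum (ll a d s) 0 =
  \sum_(t <- iota 0 a) Q0 a%:Z ((qc s t)%:Z * a%:Z + t%:Z * d%:Z)
  - \sum_(x <- iota 0 a) Q0 a%:Z x%:Z.
Proof.
move=> a0 cop; rewrite powsumE mulr_sumr -(@rsumE _ a d a0 cop) -sumrB.
apply: eq_bigr => t _; rewrite class0; congr (_ - _); congr (Q0 _ _).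
exact: wr.
Qed.

Lemma hsum1 a d s : (0 < a)%N -> coprime a d ->
  2 * (a%:Z) * powsum (ll a d s) 1 =
  \sum_(t <- iota 0 a) Q1 a%:Z ((qc s t)%:Z * a%:Z + t%:Z * d%:Z)
  - \sum_(x <- iota 0 a) Q1 a%:Z x%:Z.
Proof.
move=> a0 cop; rewrite powsumE mulr_sumr -(@rsumE _ a d a0 cop) -sumrB.
apply: eq_bigr => t _; rewrite class1; congr (_ - _); congr (Q1 _ _).
exact: wr.
Qed.

Lemma hsum2 a d s : (0 < a)%N -> coprime a d ->
  6 * (a%:Z) * powsum (ll a d s) 2 =
  \sum_(t <- iota 0 a) Q2 a%:Z ((qc s t)%:Z * a%:Z + t%:Z * d%:Z)
  - \sum_(x <- iota 0 a) Q2 a%:Z x%:Z.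
Proof.
move=> a0 cop; rewrite powsumE mulr_sumr -(@rsumE _ a d a0 cop) -sumrB.
apply: eq_bigr => t _; rewrite class2; congr (_ - _); congr (Q2 _ _).
exact: wr.
Qed.


Theorem mainTheorem6 (a d s : nat) :
  (2 <= a)%N -> (1 <= d)%N -> (1 <= s)%N -> (s < a)%N -> coprime a d ->
  let A : int := a%:Z in let D : int := d%:Z in let S : int := s%:Z in
  let c : int := ceil_c a s in
  exists l : seq nat,
    [/\ uniq l, (forall n : nat, n \in l <-> NR a d s n),
     2 * powsum l 0 = - S * c ^+ 2 + (2 * A - 2 + S) * c + (A - 1) * (D - 1),
     12 * powsum l 1 =
       - 2 * S * (2 * A + D * S) * c ^+ 3
       + (6 * A ^+ 2 + 3 * (2 * A + D * S) * (S - 1)) * c ^+ 2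
       + (6 * (D - 1) * A * (A - 1) + (3 * D - 2 * A - D * S) * S) * c
       + (A - 1) * (D - 1) * (2 * A * D - A - D - 1)
     & 12 * powsum l 2 =
       - S * ((A + S * D) * (2 * A + S * D) + A ^+ 2) * c ^+ 4
       + (4 * A ^+ 3 + 2 * (3 * S - 2) * A ^+ 2 + 2 * S * D * (3 * S - 2) * A
          + 2 * S ^+ 2 * D ^+ 2 * (S - 1)) * c ^+ 3
       + (6 * (D - 1) * A ^+ 3 + 3 * (2 - S - 2 * D) * A ^+ 2
          - 3 * S * D * (S - 2) * A - S * D ^+ 2 * (S ^+ 2 - 3 * S + 1)) * c ^+ 2
       + (2 * (2 * D - 1) * (D - 1) * A ^+ 3 - (6 * D ^+ 2 - 6 * D + 2) * A ^+ 2
          + 2 * D * (D - S) * A + S * (1 - S) * D ^+ 2) * c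
       + A * D * (A - 1) * (D - 1) * (A * D - A - D)].
Proof.
move=> a2 d1 s1 sa cop A D S c.
have a0 : (0 < a)%N by lia.
have ea : a = (a.-1).+1 by lia.
have Anz : A != 0 by rewrite /A; lia.
have hc : c = (qc s a.-1)%:Z by rewrite /c ceil_qc.
exists (ll a d s); split.
- exact: uniq_ll.
- by move=> n; apply: mem_ll.
- apply: (mulfI Anz).
  have h := @hsum0 a d s a0 cop.
  have w := @wsum0 s A D a.-1 s1; rewrite -ea in w.
  have r := @rsum0 A a.
  move: h w r; rewrite -/A.
  set X := \sum_(t <- _) _; set Y := \sum_(t <- _) _; set p := powsum _ _.
  move=> h w r.
  transitivity (2 * X - 2 * Y); first by rewrite -mulrBr -h; ring.
  rewrite w r hc /P0 -/A -/D -/S; ring.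
- apply: (mulfI Anz).
  have h := @hsum1 a d s a0 cop.
  have w := @wsum1 s A D a.-1 s1; rewrite -ea in w.
  have r := @rsum1 A a.
  move: h w r; rewrite -/A.
  set X := \sum_(t <- _) _; set Y := \sum_(t <- _) _; set p := powsum _ _.
  move=> h w r.
  transitivity (6 * X - 6 * Y); first by rewrite -mulrBr -h; ring.
  rewrite w r hc /P1 -/A -/D -/S; ring.
- apply: (mulfI Anz).
  have h := @hsum2 a d s a0 cop.
  have w := @wsum2 s A D a.-1 s1; rewrite -ea in w.
  have r := @rsum2 A a.
  move: h w r; rewrite -/A.
  set X := \sum_(t <- _) _; set Y := \sum_(t <- _) _; set p := powsum _ _.
  move=> h w r.
  transitivity (2 * X - 2 * Y); first by rewrite -mulrBr -h; ring.
  rewrite w r hc /P2 -/A -/D -/S; ring.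
Qed.
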